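(* Let $\mathbf{A}=\langle A,\wedge,\vee,\cdot,1,0,{\sim},-,'\rangle$ be a quasi relation algebra that is $n$-periodic for some odd natural number $n$, and let $m$ be an odd natural number. (i) If $m\le n$, then $\mathbf{A}\cong\mathbf{A}^{\triangledown m}$ via the map $a\mapsto -^{n-m}a$, and $\mathbf{A}\cong\mathbf{A}^{\vartriangle m}$ via the map $a\mapsto{\sim}^{n-m}a$. (ii) If $m>n$, then $\mathbf{A}\cong\mathbf{A}^{\triangledown m}$ via the map $a\mapsto{\sim}^{m-n}a$, and $\mathbf{A}\cong\mathbf{A}^{\vartriangle m}$ via the map $a\mapsto -^{m-n}a$.
   Context: An FL-algebra $\langle A,\wedge,\vee,\cdot,1,\backslash,/,0\rangle$ is a residuated lattice (a lattice, a monoid $\langle A,\cdot,1\rangle$, with $a\cdot b\le c \iff a\le c/b\iff b\le a\backslash c$) with an arbitrary constant $0$. Define ${\sim}a=a\backslash 0$, $-a=0/a$, $a+b={\sim}(-b\cdot -a)$. It is an InFL-algebra if ${\sim}{-}a={-}{\sim}a=a$ for all $a$. A quasi relation algebra (qRA) is an InFL-algebra with a unary operation $'$ with $a''=a$, $(a\vee b)'=a'\wedge b'$, $({\sim}a)'=-(a')$, $(a\cdot b)'=a'+b'$; signature $\langle A,\wedge,\vee,\cdot,1,0,{\sim},-,'\rangle$. ${\sim}^k a$, $-^k a$ are $k$-fold applications. The qRA is $n$-periodic if $n$ is the smallest positive integer with ${\sim}^n a=-^n a$ for all $a\in A$. For $k\in\omega$, $\mathbf{A}^{\triangledown k}$ (resp.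 $\mathbf{A}^{\vartriangle k}$) is the algebra $\langle A,\wedge,\vee,\cdot,1,0,{\sim},-,{}^{\triangledown k}\rangle$ (resp. with ${}^{\vartriangle k}$), where $a^{\triangledown k}={\sim}^{2k}(a')$ and $a^{\vartriangle k}=-^{2k}(a')$; these are qRAs. *)

(* Defs.v *)
From Stdlib Require Import Arith PeanoNat.

Record ops (A : Type) := Ops {
  meet : A -> A -> A;
  join : A -> A -> A;
  mul  : A -> A -> A;
  one  : A;
  zero : A;
  ldiv : A -> A -> A;
  rdiv : A -> A -> A;
  dual : A -> A
}.
Arguments Ops {A}.
Arguments meet {A}. Arguments join {A}. Arguments mul {A}. Arguments one {A}.
Arguments zero {A}. Arguments ldiv {A}. Arguments rdiv {A}. Arguments dual {A}.

Section Defs.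
Context {A : Type} (O : ops A).

Definition le (a b : A) : Prop := meet O a b = a.
(* ~a = a \ 0,  -a = 0 / a,  a + b = ~(-b . -a) *)
Definition tneg (a : A) : A := ldiv O a (zero O).
Definition mneg (a : A) : A := rdiv O (zero O) a.
Definition plus (a b : A) : A := tneg (mul O (mneg b) (mneg a)).

Definition is_lattice : Prop :=
  (forall a b c, meet O a (meet O b c) = meet O (meet O a b) c) /\
  (forall a b c, join O a (join O b c) = join O (join O a b) c) /\
  (forall a b, meet O a b = meet O b a) /\
  (forall a b, join O a b = join O b a) /\
  (forall a b, meet O a (join O a b) = a) /\
  (forall a b, join O a (meet O a b) = a).

Definition is_monoid : Prop :=
  (forall a b c, mul O a (mul O b c) = mul O (mul O a b) c) /\
  (forall a, mul O (one O) a = a) /\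
  (forall a, mul O a (one O) = a).

Definition is_residuated : Prop :=
  forall a b c,
    (le (mul O a b) c <-> le a (rdiv O c b)) /\
    (le (mul O a b) c <-> le b (ldiv O a c)).

(* FL-algebra: residuated lattice with arbitrary constant 0 *)
Definition is_FL : Prop := is_lattice /\ is_monoid /\ is_residuated.

Definition is_InFL : Prop :=
  is_FL /\ forall a, tneg (mneg a) = a /\ mneg (tneg a) = a.

Definition is_qRA : Prop :=
  is_InFL /\
  (forall a, dual O (dual O a) = a) /\
  (forall a b, dual O (join O a b) = meet O (dual O a) (dual O b)) /\
  (forall a, dual O (tneg a) = mneg (dual O a)) /\
  (forall a b, dual O (mul O a b) = plus (dual O a) (dual O b)).

Definition tneg_k (k : nat) (a : A) : A := Nat.iter k tneg a.
Definition mneg_k (k : nat) (a : A) : A := Nat.iter k mneg a.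

Definition periodic (n : nat) : Prop :=
  0 < n /\ (forall a, tneg_k n a = mneg_k n a) /\
  (forall k, 0 < k < n -> ~ (forall a, tneg_k k a = mneg_k k a)).

(* A^{triangledown k}: same reduct, ' replaced by a |-> ~^{2k}(a') *)
Definition down (k : nat) : ops A :=
  Ops (meet O) (join O) (mul O) (one O) (zero O) (ldiv O) (rdiv O)
      (fun a => tneg_k (2 * k) (dual O a)).
(* A^{vartriangle k}: ' replaced by a |-> -^{2k}(a') *)
Definition up (k : nat) : ops A :=
  Ops (meet O) (join O) (mul O) (one O) (zero O) (ldiv O) (rdiv O)
      (fun a => mneg_k (2 * k) (dual O a)).
End Defs.

Definition qRA_iso {A B : Type} (O1 : ops A) (O2 : ops B) (f : A -> B) : Prop :=
  (exists g : B -> A, (forall a, g (f a) = a) /\ (forall b, f (g b) = b)) /\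
  (forall a b, f (meet O1 a b) = meet O2 (f a) (f b)) /\
  (forall a b, f (join O1 a b) = join O2 (f a) (f b)) /\
  (forall a b, f (mul O1 a b) = mul O2 (f a) (f b)) /\
  f (one O1) = one O2 /\
  f (zero O1) = zero O2 /\
  (forall a, f (tneg O1 a) = tneg O2 (f a)) /\
  (forall a, f (mneg O1 a) = mneg O2 (f a)) /\
  (forall a, f (dual O1 a) = dual O2 (f a)).

(* Main.v *)
Require Import Defs.
From Stdlib Require Import Arith PeanoNat Lia.

Section S.
Context {A : Type} (O : ops A) (HQ : is_qRA O).

Ltac dq := destruct HQ as [[[[mA [jA [mC [jC [ab1 ab2]]]]] [[muA [mu1l mu1r]] Hres]] Hinv] [Hdd [Hdj [Hdt Hdm]]]].

Lemma meet_assoc a b c : meet O a (meet O b c) = meet O (meet O a b) c. Proof. dq; auto. Qed.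
Lemma join_assoc a b c : join O a (join O b c) = join O (join O a b) c. Proof. dq; auto. Qed.
Lemma meet_comm a b : meet O a b = meet O b a. Proof. dq; auto. Qed.
Lemma join_comm a b : join O a b = join O b a. Proof. dq; auto. Qed.
Lemma abs1 a b : meet O a (join O a b) = a. Proof. dq; auto. Qed.
Lemma abs2 a b : join O a (meet O a b) = a. Proof. dq; auto. Qed.
Lemma mul_assoc a b c : mul O a (mul O b c) = mul O (mul O a b) c. Proof. dq; auto. Qed.
Lemma mul1l a : mul O (one O) a = a. Proof. dq; auto. Qed.
Lemma res1 a b c : le O (mul O a b) c <-> le O a (rdiv O c b). Proof. dq; apply Hres. Qed.
Lemma res2 a b c : le O (mul O a b) c <-> le O b (ldiv O a c). Proof. dq; apply Hres. Qed.
Lemma tu a : tneg O (mneg O a) = a. Proof. dq; apply Hinv. Qed.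
Lemma ut a : mneg O (tneg O a) = a. Proof. dq; apply Hinv. Qed.
Lemma dual_t a : dual O (tneg O a) = mneg O (dual O a). Proof. dq; auto. Qed.
Lemma dual_dual a : dual O (dual O a) = a. Proof. dq; auto. Qed.
Lemma dual_u a : dual O (mneg O a) = tneg O (dual O a).
Proof.
  rewrite <- (tu (dual O (mneg O a))). rewrite <- dual_t, tu. reflexivity.
Qed.

Lemma meet_idem a : meet O a a = a.
Proof.
  transitivity (meet O a (join O a (meet O a a))); [rewrite abs2; reflexivity | apply abs1].
Qed.

Lemma join_idem a : join O a a = a.
Proof.
  transitivity (join O a (meet O a (join O a a))); [rewrite abs1; reflexivity | apply abs2].
Qed.

Lemma le_refl a : le O a a. Proof. apply meet_idem. Qed.
Lemma le_antisym a b : le O a b -> le O b a -> a = b.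
Proof. unfold le; intros H1 H2. rewrite <- H1 at 1. rewrite meet_comm. exact H2. Qed.
Lemma le_trans a b c : le O a b -> le O b c -> le O a c.
Proof. unfold le; intros H1 H2. rewrite <- H1, <- meet_assoc, H2. reflexivity. Qed.

Lemma le_join a b : le O a b <-> join O a b = b.
Proof.
  unfold le; split; intro H.
  - rewrite <- H, join_comm, meet_comm. apply abs2.
  - rewrite <- H. apply abs1.
Qed.

Lemma le_meet x a b : le O x (meet O a b) <-> le O x a /\ le O x b.
Proof.
  split.
  - intro H. split.
    + apply le_trans with (meet O a b); auto. unfold le.
      rewrite meet_comm, meet_assoc, meet_idem; reflexivity.
    + apply le_trans with (meet O a b); auto. unfold le.
      rewrite <- meet_assoc, meet_idem; reflexivity.
  - intros [H1 H2]. unfold le in *. rewrite meet_assoc, H1, H2. reflexivity.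
Qed.

Lemma le_joinl a b x : le O (join O a b) x <-> le O a x /\ le O b x.
Proof.
  rewrite !le_join. split.
  - intro H. split.
    + rewrite <- H at 1. rewrite !join_assoc, join_idem. exact H.
    + rewrite <- H at 1. rewrite join_assoc, (join_comm a b), join_assoc, join_idem, (join_comm b a). exact H.
  - intros [H1 H2]. rewrite <- join_assoc, H2, H1. reflexivity.
Qed.

Lemma yon_lo p q : (forall x, le O x p <-> le O x q) -> p = q.
Proof.
  intro H. apply le_antisym; [apply H | apply <- H]; apply le_refl.
Qed.
Lemma yon_up p q : (forall x, le O p x <-> le O q x) -> p = q.
Proof.
  intro H. apply le_antisym; [apply <- H | apply H]; apply le_refl.
Qed.

Lemma le_t x v : le O x (tneg O v) <-> le O (mul O v x) (zero O).
Proof. unfold tneg. symmetry. apply res2. Qed.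
Lemma le_u x v : le O x (mneg O v) <-> le O (mul O x v) (zero O).
Proof. unfold mneg. symmetry. apply res1. Qed.

Lemma t_anti a b : le O (tneg O a) (tneg O b) <-> le O b a.
Proof.
  rewrite le_t. rewrite <- (ut a) at 2. rewrite le_u. tauto.
Qed.
Lemma u_anti a b : le O (mneg O a) (mneg O b) <-> le O b a.
Proof.
  rewrite le_u. rewrite <- (tu a) at 2. rewrite le_t. tauto.
Qed.

Definition tt a := tneg O (tneg O a).
Definition uu a := mneg O (mneg O a).
Lemma tt_uu a : tt (uu a) = a. Proof. unfold tt, uu. rewrite !tu. auto. Qed.
Lemma uu_tt a : uu (tt a) = a. Proof. unfold tt, uu. rewrite !ut. auto. Qed.
Lemma tt_le a b : le O (tt a) (tt b) <-> le O a b.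
Proof. unfold tt. rewrite t_anti, t_anti. tauto. Qed.
Lemma uu_le a b : le O (uu a) (uu b) <-> le O a b.
Proof. unfold uu. rewrite u_anti, u_anti. tauto. Qed.

Lemma rot p q r : le O (mul O (mul O p q) r) (zero O) <->
                  le O (mul O (mul O q r) (tt p)) (zero O).
Proof.
  rewrite <- mul_assoc, <- le_t. rewrite <- le_u. unfold tt. rewrite ut. tauto.
Qed.

Lemma rot3 p q r : le O (mul O (mul O p q) r) (zero O) <->
                  le O (mul O (mul O (tt p) (tt q)) (tt r)) (zero O).
Proof. rewrite rot, rot, rot. tauto. Qed.

Lemma tt_mul_le a b z : le O (mul O a b) z <-> le O (mul O (tt a) (tt b)) (tt z).
Proof.
  rewrite <- (tu z) at 1. rewrite le_t, mul_assoc, rot3, <- mul_assoc, <- le_t.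
  unfold tt. rewrite tu. tauto.
Qed.

Record hom (h : A -> A) : Prop := {
  h_meet : forall a b, h (meet O a b) = meet O (h a) (h b);
  h_join : forall a b, h (join O a b) = join O (h a) (h b);
  h_mul : forall a b, h (mul O a b) = mul O (h a) (h b);
  h_one : h (one O) = one O;
  h_zero : h (zero O) = zero O;
  h_t : forall a, h (tneg O a) = tneg O (h a);
  h_u : forall a, h (mneg O a) = mneg O (h a)
}.

Lemma t_one : tneg O (one O) = zero O.
Proof. apply yon_lo. intro x. rewrite le_t, mul1l. tauto. Qed.
Lemma u_one : mneg O (one O) = zero O.
Proof. apply yon_lo. intro x. rewrite le_u. dq. rewrite mu1r. tauto. Qed.

Lemma iso_meet h g : (forall a, h (g a) = a) -> (forall a b, le O (h a) (h b) <-> le O a b) ->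
  forall a b, h (meet O a b) = meet O (h a) (h b).
Proof.
  intros Hhg Hle a b. apply yon_lo. intro x.
  rewrite le_meet. rewrite <- (Hhg x). rewrite !Hle. apply le_meet.
Qed.
Lemma iso_join h g : (forall a, h (g a) = a) -> (forall a b, le O (h a) (h b) <-> le O a b) ->
  forall a b, h (join O a b) = join O (h a) (h b).
Proof.
  intros Hhg Hle a b. apply yon_up. intro x.
  rewrite le_joinl. rewrite <- (Hhg x). rewrite !Hle. apply le_joinl.
Qed.

Lemma tt_hom : hom tt.
Proof.
  constructor.
  - apply (iso_meet tt uu tt_uu tt_le).
  - apply (iso_join tt uu tt_uu tt_le).
  - intros a b. apply yon_up. intro w. rewrite <- (tt_uu w). rewrite tt_le.
    rewrite tt_mul_le, tt_uu. tauto.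
  - unfold tt. rewrite t_one, <- u_one, tu. reflexivity.
  - unfold tt. rewrite <- u_one at 1. rewrite tu. apply t_one.
  - reflexivity.
  - intro a. unfold tt. rewrite tu, ut. reflexivity.
Qed.

Lemma inv_hom h g : hom h -> (forall a, h (g a) = a) -> (forall a, g (h a) = a) -> hom g.
Proof.
  intros Hh Hhg Hgh.
  assert (E : forall x y, h x = h y -> x = y).
  { intros x y Hxy. rewrite <- (Hgh x), <- (Hgh y), Hxy. reflexivity. }
  constructor; intros; apply E; rewrite ?Hhg.
  - rewrite h_meet, !Hhg; auto.
  - rewrite h_join, !Hhg; auto.
  - rewrite h_mul, !Hhg; auto.
  - rewrite h_one; auto.
  - rewrite h_zero; auto.
  - rewrite h_t, !Hhg; auto.
  - rewrite h_u, !Hhg; auto.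
Qed.

Lemma uu_hom : hom uu.
Proof. apply (inv_hom tt uu tt_hom tt_uu uu_tt). Qed.

Lemma iter_hom h j : hom h -> hom (fun a => Nat.iter j h a).
Proof.
  intro Hh. induction j as [|j IH]; simpl.
  - constructor; auto.
  - constructor; intros.
    + rewrite h_meet, (h_meet _ Hh); auto.
    + rewrite h_join, (h_join _ Hh); auto.
    + rewrite h_mul, (h_mul _ Hh); auto.
    + rewrite h_one, (h_one _ Hh); auto.
    + rewrite h_zero, (h_zero _ Hh); auto.
    + rewrite h_t, (h_t _ Hh); auto.
    + rewrite h_u, (h_u _ Hh); auto.
Qed.

Lemma tk_even j a : tneg_k O (2 * j) a = Nat.iter j tt a.
Proof.
  unfold tneg_k. induction j as [|j IH]; auto.
  replace (2 * S j) with (S (S (2 * j))) by lia.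
  change (tneg O (tneg O (Nat.iter (2*j) (tneg O) a)) = tt (Nat.iter j tt a)). rewrite IH. reflexivity.
Qed.
Lemma uk_even j a : mneg_k O (2 * j) a = Nat.iter j uu a.
Proof.
  unfold mneg_k. induction j as [|j IH]; auto.
  replace (2 * S j) with (S (S (2 * j))) by lia.
  change (mneg O (mneg O (Nat.iter (2*j) (mneg O) a)) = uu (Nat.iter j uu a)). rewrite IH. reflexivity.
Qed.

Lemma tk_hom j : hom (tneg_k O (2 * j)).
Proof.
  generalize (iter_hom tt j tt_hom). intros [H1 H2 H3 H4 H5 H6 H7].
  constructor; intros; rewrite ?tk_even; auto.
Qed.
Lemma uk_hom j : hom (mneg_k O (2 * j)).
Proof.
  generalize (iter_hom uu j uu_hom). intros [H1 H2 H3 H4 H5 H6 H7].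
  constructor; intros; rewrite ?uk_even; auto.
Qed.

Lemma tk_uk k a : tneg_k O k (mneg_k O k a) = a.
Proof.
  unfold tneg_k, mneg_k. revert a; induction k as [|k IH]; intro a; auto.
  rewrite Nat.iter_succ_r. simpl. rewrite tu. apply IH.
Qed.
Lemma uk_tk k a : mneg_k O k (tneg_k O k a) = a.
Proof.
  unfold tneg_k, mneg_k. revert a; induction k as [|k IH]; intro a; auto.
  rewrite Nat.iter_succ_r. simpl. rewrite ut. apply IH.
Qed.

Lemma dual_tk k a : dual O (tneg_k O k a) = mneg_k O k (dual O a).
Proof.
  unfold tneg_k, mneg_k. induction k; simpl; auto. rewrite dual_t, IHk; auto.
Qed.
Lemma dual_uk k a : dual O (mneg_k O k a) = tneg_k O k (dual O a).
Proof.
  unfold tneg_k, mneg_k. induction k; simpl; auto. rewrite dual_u, IHk; auto.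
Qed.

Lemma tk_add p q a : tneg_k O (p + q) a = tneg_k O p (tneg_k O q a).
Proof. unfold tneg_k. apply Nat.iter_add. Qed.
Lemma uk_add p q a : mneg_k O (p + q) a = mneg_k O p (mneg_k O q a).
Proof. unfold mneg_k. apply Nat.iter_add. Qed.

End S.

Theorem proposition2p6 (A : Type) (O : ops A) (n m : nat) :
  is_qRA O -> periodic O n -> Nat.Odd n -> Nat.Odd m ->
  (m <= n ->
     qRA_iso O (down O m) (mneg_k O (n - m)) /\
     qRA_iso O (up O m) (tneg_k O (n - m))) /\
  (n < m ->
     qRA_iso O (down O m) (tneg_k O (m - n)) /\
     qRA_iso O (up O m) (mneg_k O (m - n))).
Proof.
  intros HQ [_ [Hper _]] [a Ha] [b Hb].
  assert (T2 : forall x, tneg_k O (2 * n) x = x).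
  { intro x. replace (2 * n) with (n + n) by lia. rewrite tk_add, Hper. apply uk_tk; exact HQ. }
  assert (U2 : forall x, mneg_k O (2 * n) x = x).
  { intro x. replace (2 * n) with (n + n) by lia. rewrite uk_add, <- Hper. apply tk_uk; exact HQ. }
  split; intro Hmn.
  - assert (Hk : n - m = 2 * (a - b)) by lia.
    split.
    + destruct (uk_hom O HQ (a - b)) as [H1 H2 H3 H4 H5 H6 H7].
      rewrite Hk. set (k := 2 * (a - b)) in *. clearbody k. split; [|split; [|split; [|split; [|split; [|split; [|split; [|split]]]]]]];
        simpl; auto.
      * exists (tneg_k O k). split; intro; [apply (tk_uk O HQ) | apply (uk_tk O HQ)].
      * intro x. replace (m + (m + 0)) with (2 * m) by lia. rewrite (dual_uk O HQ). set (z := dual O x). rewrite <- tk_add.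
        transitivity (tneg_k O (2*m+k) (tneg_k O k (mneg_k O k z))).
        -- rewrite <- tk_add. replace (2*m+k+k) with (2*n) by lia. symmetry; apply T2.
        -- rewrite (tk_uk O HQ). reflexivity.
    + destruct (tk_hom O HQ (a - b)) as [H1 H2 H3 H4 H5 H6 H7].
      rewrite Hk. set (k := 2 * (a - b)) in *. clearbody k. split; [|split; [|split; [|split; [|split; [|split; [|split; [|split]]]]]]];
        simpl; auto.
      * exists (mneg_k O k). split; intro; [apply (uk_tk O HQ) | apply (tk_uk O HQ)].
      * intro x. replace (m + (m + 0)) with (2 * m) by lia. rewrite (dual_tk O HQ). set (z := dual O x). rewrite <- uk_add.
        transitivity (mneg_k O (2*m+k) (mneg_k O k (tneg_k O k z))).
        -- rewrite <- uk_add. replace (2*m+k+k) with (2*n) by lia. symmetry; apply U2.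
        -- rewrite (uk_tk O HQ). reflexivity.
  - assert (Hk : m - n = 2 * (b - a)) by lia.
    split.
    + destruct (tk_hom O HQ (b - a)) as [H1 H2 H3 H4 H5 H6 H7].
      rewrite Hk. set (k := 2 * (b - a)) in *. clearbody k. split; [|split; [|split; [|split; [|split; [|split; [|split; [|split]]]]]]];
        simpl; auto.
      * exists (mneg_k O k). split; intro; [apply (uk_tk O HQ) | apply (tk_uk O HQ)].
      * intro x. replace (m + (m + 0)) with (2 * m) by lia. rewrite (dual_tk O HQ).
        replace (2 * m) with (k + (k + 2 * n)) by lia.
        rewrite !tk_add, T2, (tk_uk O HQ). reflexivity.
    + destruct (uk_hom O HQ (b - a)) as [H1 H2 H3 H4 H5 H6 H7].
      rewrite Hk. set (k := 2 * (b - a)) in *. clearbody k. split; [|split; [|split; [|split; [|split; [|split; [|split; [|split]]]]]]];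
        simpl; auto.
      * exists (tneg_k O k). split; intro; [apply (tk_uk O HQ) | apply (uk_tk O HQ)].
      * intro x. replace (m + (m + 0)) with (2 * m) by lia. rewrite (dual_uk O HQ).
        replace (2 * m) with (k + (k + 2 * n)) by lia.
        rewrite !uk_add, U2, (uk_tk O HQ). reflexivity.
Qed.
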